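(* Let $G$ be an undirected graph, let $s,\Delta_s$ be positive integers, and let $D\subset V(G)$ be a subset of vertices. If there exists an $(s,\Delta_s)$-dissolution $(D,z)$ for $G$ (with this set $D$), then such a dissolution can be found by computing a maximum flow in a flow network with $|V(G)|+2$ nodes and $|E(G)|+2|V(G)|$ arcs in which every arc capacity is either $s$ or $\Delta_s$.
   Context: For $V'\subseteq V(G)$ let $Z(V',G):=\{(x,y)\mid x\in V',\ y\in V(G)\setminus V',\ \{x,y\}\in E(G)\}$. For positive integers $s,\Delta_s$, an $(s,\Delta_s)$-dissolution for $G$ is a pair $(D,z)$ with $D\subset V(G)$ and $z\colon Z(D,G)\to\{0,\dots,s\}$ such that (a) for every $v'\in D$: $\sum_{(v',v)\in Z(D,G)} z(v',v)=s$, and (b) for every $v\in V(G)\setminus D$: $\sum_{(v',v)\in Z(D,G)} z(v',v)=\Delta_s$. *)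

(* Defs.v *)
From mathcomp Require Import all_boot all_algebra.
Set Implicit Arguments. Unset Strict Implicit. Unset Printing Implicit Defensive.

(* A simple undirected graph: vertex type T (finite), adjacency e (symmetric,
   irreflexive). Its edge set E(G) as a set of 2-element vertex sets. *)
Definition edges (T : finType) (e : rel T) : {set {set T}} :=
  [set [set x; y] | x in T, y in T & e x y].

(* (s, Ds)-dissolution (D, z): z is given as a function T -> T -> nat, of which
   only its values on Z(D,G) = {(x,y) | x in D, y notin D, {x,y} in E} matter. *)
Definition is_dissolution (T : finType) (e : rel T) (s Ds : nat)
    (D : {set T}) (z : T -> T -> nat) : Prop :=
  [/\ (forall x y, x \in D -> y \notin D -> e x y -> z x y <= s),
      (forall x, x \in D -> \sum_(y | (y \notin D) && e x y) z x y = s)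
    & (forall y, y \notin D -> \sum_(x | (x \in D) && e x y) z x y = Ds)].

(* General flow networks with nat capacities; cap u w = 0 means "no arc". *)
Section Flow.
Variable N : finType.

Definition arcs (cap : N -> N -> nat) : {set N * N} :=
  [set a | 0 < cap a.1 a.2].

Definition is_flow (src snk : N) (cap f : N -> N -> nat) : Prop :=
  (forall u w, f u w <= cap u w) /\
  (forall v, v != src -> v != snk -> \sum_u f u v = \sum_w f v w).

Definition flow_value (src : N) (f : N -> N -> nat) : int :=
  (Posz (\sum_w f src w) - Posz (\sum_u f u src))%R.

Definition is_max_flow (src snk : N) (cap f : N -> N -> nat) : Prop :=
  is_flow src snk cap f /\
  forall g, is_flow src snk cap g -> (flow_value src g <= flow_value src f)%R.
End Flow.

(* Nodes of the network: None = source, Some None = sink, Some (Some v) = v. *)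
Definition node (T : finType) := option (option T).

Definition diss_cap (T : finType) (e : rel T) (s Ds : nat) (D : {set T})
    (u w : node T) : nat :=
  match u, w with
  | None, Some (Some v) => if v \in D then s else 0
  | Some (Some v), Some None => if v \notin D then Ds else 0
  | Some (Some x), Some (Some y) =>
      if [&& x \in D, y \notin D & e x y] then s else 0
  | _, _ => 0
  end.

Definition flow_to_z (T : finType) (f : node T -> node T -> nat) : T -> T -> nat :=
  fun x y => f (Some (Some x)) (Some (Some y)).

(* Main.v *)
Require Import Defs.
From mathcomp Require Import all_boot all_algebra.
From Stdlib Require Import Lia. From mathcomp Require Import zify.

Lemma sum_opt (T : finType) (F : option T -> nat) :
  \sum_(x : option T) F x = F None + \sum_(x : T) F (Some x).
Proof.
rewrite (bigD1 None) //=; congr (_ + _).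
rewrite (reindex_omap Some (fun x => x)) //=.
  by apply: eq_bigl => x; rewrite eqxx.
by case.
Qed.

Lemma sum_eq_le (I : finType) (P : pred I) (a b : I -> nat) :
  (forall i, P i -> a i <= b i) -> \sum_(i | P i) b i <= \sum_(i | P i) a i ->
  forall i, P i -> a i = b i.
Proof.
move=> hab hs i Pi; apply/eqP; rewrite eqn_leq hab //=.
move: hs; rewrite (bigD1 i) //= [X in _ <= X](bigD1 i) //=.
have : \sum_(j | P j && (j != i)) a j <= \sum_(j | P j && (j != i)) b j.
  by apply: leq_sum => j /andP[Pj _]; apply: hab.
lia.
Qed.

Lemma arcs_bound (T : finType) (e : rel T) (s Ds : nat) (D : {set T}) :
  #|arcs (diss_cap e s Ds D)| <= #|edges e| + 2 * #|T|.
Proof.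
pose h := fun p : T * T => (Some (Some p.1) : node T, Some (Some p.2) : node T).
pose P := [set p : T * T | [&& p.1 \in D, p.2 \notin D & e p.1 p.2]].
pose A1 := [set (None : node T, Some (Some v) : node T) | v in D].
pose A2 := [set (Some (Some v) : node T, Some None : node T) | v in ~: D].
pose A3 := h @: P.
have sub : arcs (diss_cap e s Ds D) \subset A1 :|: A2 :|: A3.
  apply/subsetP => -[u w]; rewrite inE /=.
  case: u => [[u|]|]; case: w => [[w|]|] //=.
  - case: ifP => // /and3P[uD wD euw] _.
    by rewrite !inE; apply/orP; right; apply/imsetP; exists (u, w); rewrite // inE /= uD wD euw.
  - case: ifP => // uD _.
    by rewrite !inE; apply/orP; left; apply/orP; right; apply/imsetP; exists u; rewrite // inE.
  - case: ifP => // uD _.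
    by rewrite !inE; apply/orP; left; apply/orP; left; apply/imsetP; exists w.
have c1 : #|A1| <= #|D| by apply: leq_imset_card.
have c2 : #|A2| <= #|~: D| by apply: leq_imset_card.
have c3 : #|A3| <= #|P| by apply: leq_imset_card.
have c4 : #|P| <= #|edges e|.
  pose g := fun p : T * T => [set p.1; p.2].
  have inj : {in P &, injective g}.
    move=> [x1 y1] [x2 y2]; rewrite !inE /= /g => /and3P[x1D y1D _] /and3P[x2D y2D _] E.
    have hx : x1 \in [set x2; y2] by rewrite -E !inE eqxx.
    have hy : y1 \in [set x2; y2] by rewrite -E !inE eqxx orbT.
    rewrite !inE in hx hy.
    case/orP: hx => /eqP hx; last by subst; rewrite x1D in y2D.
    case/orP: hy => /eqP hy; first by subst; rewrite x2D in y1D.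
    by subst.
  rewrite -(card_in_imset inj); apply: subset_leq_card; apply/subsetP => E /imsetP[[x y]].
  rewrite inE /= => /and3P[_ _ exy] ->.
  by rewrite /edges; apply: imset2_f; rewrite ?inE.
have cD := cardsC D.
apply: (leq_trans (subset_leq_card sub)).
apply: (leq_trans (leq_card_setU _ _).1).
have H3 : #|A1 :|: A2| + #|A3| <= #|D| + #|~: D| + #|edges e|.
  apply: leq_add; last by apply: leq_trans c4.
  apply: (leq_trans (leq_card_setU _ _).1).
  exact: leq_add.
apply: (leq_trans H3); rewrite cD; lia.
Qed.
Lemma sum_node (T : finType) (h : node T -> nat) :
  \sum_u h u = h None + h (Some None) + \sum_v h (Some (Some v)).
Proof. by rewrite sum_opt sum_opt addnA. Qed.

Lemma double_count (T : finType) (e : rel T) (D : {set T}) (Z : T -> T -> nat) :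
  \sum_(y | y \notin D) \sum_(x | (x \in D) && e x y) Z x y =
  \sum_(x | x \in D) \sum_(y | (y \notin D) && e x y) Z x y.
Proof.
pose H := fun x y => if [&& x \in D, y \notin D & e x y] then Z x y else 0.
transitivity (\sum_y \sum_x H x y).
  rewrite big_mkcond; apply: eq_bigr => y _ /=; case yD: (y \in D) => /=.
    by rewrite big1 // => x _; rewrite /H yD andbF.
  rewrite big_mkcond; apply: eq_bigr => x _; rewrite /H yD /=.
  by case: (x \in D).
rewrite exchange_big /= [RHS]big_mkcond; apply: eq_bigr => x _ /=; case xD: (x \in D) => /=.
  rewrite [RHS]big_mkcond; apply: eq_bigr => y _; rewrite /H xD /=.
  by case: (y \in D).
by rewrite big1 // => y _; rewrite /H xD.
Qed.

Theorem corollary1 (T : finType) (e : rel T)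
    (e_sym : symmetric e) (e_irr : irreflexive e)
    (s Ds : nat) (s_pos : 0 < s) (Ds_pos : 0 < Ds) (D : {set T}) :
  (exists z, is_dissolution e s Ds D z) ->
  [/\ #|[set: node T]| = #|T| + 2,
      #|arcs (diss_cap e s Ds D)| <= #|edges e| + 2 * #|T|,
      (forall u w, (u, w) \in arcs (diss_cap e s Ds D) ->
         diss_cap e s Ds D u w = s \/ diss_cap e s Ds D u w = Ds)
    & forall f, is_max_flow None (Some None) (diss_cap e s Ds D) f ->
         is_dissolution e s Ds D (flow_to_z f)].
Proof.
move=> [z [za zb zc]]; split.
- by rewrite cardsT !card_option addn2.
- exact: arcs_bound.
- move=> [[u|]|] [[w|]|]; rewrite inE /=; try (by []);
    by case: ifP => _ //; auto.
move=> f [[fle fcons] fmax].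
pose g := fun u w : node T => match u, w with
 | None, Some (Some v) => if v \in D then s else 0
 | Some (Some v), Some None => if v \notin D then Ds else 0
 | Some (Some x), Some (Some y) => if [&& x \in D, y \notin D & e x y] then z x y else 0
 | _, _ => 0 end.
have gflow : is_flow None (Some None) (diss_cap e s Ds D) g.
  split.
    move=> [[u|]|] [[w|]|] //=; case: ifP => // /and3P[uD wD euw].
    exact: za.
  move=> [[v|]|] // _ _; rewrite !sum_node /=.
  case vD: (v \in D) => /=.
    rewrite big1; last by move=> x _; rewrite andbF.
    by rewrite !add0n !addn0 -(zb v vD) [LHS]big_mkcond.
  by rewrite big1_eq !addn0 !add0n -(zc v (negbT vD)) [RHS]big_mkcond.
have fN0 : forall u, f u None = 0.
  by move=> u; apply/eqP; rewrite -leqn0; apply: leq_trans (fle u None) _; case: u => [[u|]|].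
have fS0 : forall w, f (Some None) w = 0.
  by move=> w; apply/eqP; rewrite -leqn0; apply: leq_trans (fle _ w) _; case: w => [[w|]|].
have fNS : f None (Some None) = 0.
  by apply/eqP; rewrite -leqn0; apply: (fle None (Some None)).
pose F := fun x y => f (Some (Some x)) (Some (Some y)).
have F0 : forall x y, ~~ [&& x \in D, y \notin D & e x y] -> F x y = 0.
  move=> x y c; apply/eqP; rewrite -leqn0; apply: leq_trans (fle _ _) _ => /=.
  by rewrite (negbTE c).
have val : forall h : node T -> node T -> nat, (forall u, h u None = 0) ->
    h None (Some None) = 0 ->
    flow_value None h = Posz (\sum_v h None (Some (Some v))).
  move=> h h0 h1; rewrite /flow_value.
  have -> : \sum_u h u None = 0 by apply: big1 => u _; exact: h0.
  by rewrite GRing.subr0 sum_node h0 h1.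
have hval := fmax g gflow.
rewrite (val g) ?(val f) ?lez_nat in hval; try by [|case=> [[?|]|]].
have fsrc : forall v, f None (Some (Some v)) = if v \in D then s else 0.
  move=> v; apply: (@sum_eq_le _ xpredT (fun v => f None (Some (Some v))) (fun v => g None (Some (Some v))) _ hval v isT).
  by move=> w _; apply: (fle None (Some (Some w))).
have consv : forall v, f None (Some (Some v)) + \sum_x F x v =
    f (Some (Some v)) (Some None) + \sum_y F v y.
  move=> v; have := fcons (Some (Some v)) isT isT.
  by rewrite !sum_node fS0 fN0 !add0n addn0.
have rowD : forall x, x \in D -> \sum_(y | (y \notin D) && e x y) F x y = \sum_y F x y.
  move=> x xD; rewrite big_mkcond; apply: eq_bigr => y _; case: ifP => // c.
  by rewrite F0 // xD /= c.
have colD : forall y, y \notin D -> \sum_(x | (x \in D) && e x y) F x y = \sum_x F x y.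
  move=> y yD; rewrite big_mkcond; apply: eq_bigr => x _; case: ifP => // c.
  by rewrite F0 //; apply/negP => /and3P[a _ d]; move: c; rewrite a d.
have colDz : forall y, y \in D -> \sum_x F x y = 0.
  move=> y yD; apply: big1 => x _; rewrite F0 //; apply/negP => /and3P[_ b _].
  by rewrite yD in b.
have rowNz : forall x, x \notin D -> \sum_y F x y = 0.
  move=> x xD; apply: big1 => y _; rewrite F0 //; apply/negP => /and3P[a _ _].
  by rewrite a in xD.
have fsnkD : forall x, x \in D -> f (Some (Some x)) (Some None) = 0.
  move=> x xD; apply/eqP; rewrite -leqn0; apply: leq_trans (fle _ _) _ => /=.
  by rewrite xD.
have hb : forall x, x \in D -> \sum_(y | (y \notin D) && e x y) F x y = s.
  move=> x xD; rewrite rowD //; have := consv x.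
  by rewrite fsrc xD colDz // fsnkD // addn0 add0n => <-.
have key : forall y, y \notin D -> f (Some (Some y)) (Some None) = \sum_(x | (x \in D) && e x y) F x y.
  move=> y yD; rewrite colD //; have := consv y.
  by rewrite fsrc (negbTE yD) rowNz // add0n addn0 => ->.
have tot1 : \sum_(y | y \notin D) f (Some (Some y)) (Some None) = \sum_(x | x \in D) s.
  rewrite (eq_bigr _ key) double_count; exact: eq_bigr.
have tot2 : \sum_(y | y \notin D) Ds = \sum_(x | x \in D) s.
  rewrite -(eq_bigr _ zc) double_count; exact: eq_bigr.
have snk : forall y, y \notin D -> f (Some (Some y)) (Some None) = Ds.
  apply: (@sum_eq_le _ (fun y => y \notin D) (fun y => f (Some (Some y)) (Some None)) (fun _ => Ds)).
    by move=> y yD; have := fle (Some (Some y)) (Some None); rewrite /= yD.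
  by rewrite tot1 tot2.
split; rewrite /flow_to_z.
- by move=> x y xD yD exy; have := fle (Some (Some x)) (Some (Some y)); rewrite /= xD yD exy.
- exact: hb.
- by move=> y yD; rewrite -key // snk.
Qed.
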